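(* Let $\mathfrak g=\mathfrak g_{-1}\oplus\mathfrak g_0\oplus\mathfrak g_1$ be a complex Lie superalgebra with $\dim\mathfrak g_{\bar1}<\infty$ and compatible $\mathbb Z$-grading, and let $M$ be a simple $\mathfrak g$-supermodule. Then there is a simple $\mathfrak g_0$-supermodule $N$ such that $M$ embeds into $\mathrm{Coind}_{\mathfrak g_{\geq0}}^{\mathfrak g}(N)$.
   Context: Compatible grading: $\mathfrak g_0=\mathfrak g_{\bar0}$, $\mathfrak g_{\bar1}=\mathfrak g_{-1}\oplus\mathfrak g_1$, $\mathfrak g_{\pm1}$ $\mathfrak g_0$-submodules, $[\mathfrak g_{\pm1},\mathfrak g_{\pm1}]=0$; $\mathfrak g_{\geq0}=\mathfrak g_0\oplus\mathfrak g_1$. Homomorphisms are even. $\mathrm{Coind}_{\mathfrak g_{\geq0}}^{\mathfrak g}(N)=\{f\in\mathrm{Hom}_{\mathbb C}(U(\mathfrak g),N)\mid f(pu)=pf(u)\ \forall p\in U(\mathfrak g_{\geq0})\}$ with $(xf)(u)=f(ux)$, where $\mathfrak g_1$ acts on $N$ by zero. *)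

(* Defs.v *)
From HB Require Import structures.
From mathcomp Require Import all_boot all_order all_algebra.
From mathcomp Require Import reals complex.
Set Implicit Arguments. Unset Strict Implicit. Unset Printing Implicit Defensive.
Import Order.TTheory GRing.Theory Num.Theory.
Local Open Scope ring_scope.

(* The complex numbers: C = R[i] for a real field R (any realType is iso to the reals). *)
Definition Cplx (R : realType) : fieldType := R[i].

Section Super.
Variable K : fieldType.

(* parity: false = even, true = odd; sign (-1)^(a b) *)
Definition ssign (a b : bool) : K := if a && b then -1 else 1.

(* A super vector space structure on W is given by its (linear) projection pe onto
   the even part, along the odd part. *)
Definition super_space (W : lmodType K) (pe : W -> W) : Prop :=
  linear pe /\ forall w, pe (pe w) = pe w.

Definition homog (W : lmodType K) (pe : W -> W) (b : bool) (w : W) : Prop :=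
  if b then pe w = 0 else pe w = w.

Definition bilinear_map (V W U : lmodType K) (f : V -> W -> U) : Prop :=
  (forall x, linear (f x)) /\ (forall y, linear (fun x => f x y)).

Definition lie_superalgebra (V : lmodType K) (pe : V -> V) (br : V -> V -> V) : Prop :=
  [/\ super_space pe, bilinear_map br,
    (forall a b x y, homog pe a x -> homog pe b y -> homog pe (a (+) b) (br x y)),
    (forall a b x y, homog pe a x -> homog pe b y -> br x y = - (ssign a b *: br y x)) &
    (forall a b c x y z, homog pe a x -> homog pe b y -> homog pe c z ->
       br x (br y z) = br (br x y) z + ssign a b *: br y (br x z))].

(* Compatible Z-grading g = g_{-1} + g_0 + g_1 given by projections Pm, P0, Pp:
   g_0 = g_{0bar}, g_{1bar} = g_{-1} + g_1, g_{+-1} are g_0-submodules,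
   [g_{+-1}, g_{+-1}] = 0. *)
Definition compatible_grading (V : lmodType K) (pe : V -> V) (br : V -> V -> V)
    (Pm P0 Pp : V -> V) : Prop :=
  [/\ (linear Pm /\ linear P0 /\ linear Pp),
    (forall x, Pm x + P0 x + Pp x = x),
    (forall x, Pm (Pm x) = Pm x /\ P0 (P0 x) = P0 x /\ Pp (Pp x) = Pp x),
    (forall x, Pm (P0 x) = 0 /\ Pm (Pp x) = 0 /\ P0 (Pm x) = 0 /\
               P0 (Pp x) = 0 /\ Pp (Pm x) = 0 /\ Pp (P0 x) = 0) &
    (forall x, P0 x = pe x) /\
    [/\ (forall x y, P0 x = x -> Pm y = y -> Pm (br x y) = br x y),
        (forall x y, P0 x = x -> Pp y = y -> Pp (br x y) = br x y),
        (forall x y, Pm x = x -> Pm y = y -> br x y = 0) &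
        (forall x y, Pp x = x -> Pp y = y -> br x y = 0)]].

Definition odd_part_findim (V : lmodType K) (pe : V -> V) : Prop :=
  exists (n : nat) (e : 'I_n -> V),
    forall x, homog pe true x -> exists c : 'I_n -> K, x = \sum_(i < n) c i *: e i.

(* A supermodule (W, qe, rho) over the Lie superalgebra (V, pe, br), where the
   action is only required for x with okx x (okx = setT for g, okx = g_0 for g_0). *)
Definition supermodule (V : lmodType K) (pe : V -> V) (br : V -> V -> V)
    (okx : V -> Prop) (W : lmodType K) (qe : W -> W) (rho : V -> W -> W) : Prop :=
  [/\ super_space qe,
    (forall x, okx x -> linear (rho x)),
    (forall c x y w, okx x -> okx y -> rho (c *: x + y) w = c *: rho x w + rho y w),
    (forall a b x w, okx x -> homog pe a x -> homog qe b w -> homog qe (a (+) b) (rho x w)) &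
    (forall a b x y w, okx x -> okx y -> homog pe a x -> homog pe b y ->
       rho (br x y) w = rho x (rho y w) - ssign a b *: rho y (rho x w))].

Definition sub_supermodule (V W : lmodType K) (qe : W -> W) (rho : V -> W -> W)
    (okx : V -> Prop) (S : W -> Prop) : Prop :=
  [/\ S 0, (forall c u w, S u -> S w -> S (c *: u + w)),
    (forall w, S w -> S (qe w)) &
    (forall x w, okx x -> S w -> S (rho x w))].

Definition simple_supermodule (V : lmodType K) (pe : V -> V) (br : V -> V -> V)
    (okx : V -> Prop) (W : lmodType K) (qe : W -> W) (rho : V -> W -> W) : Prop :=
  [/\ supermodule pe br okx qe rho, (exists w : W, w != 0) &
    (forall S : W -> Prop, sub_supermodule qe rho okx S ->
       (forall w, S w -> w = 0) \/ (forall w, S w))].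

(* A linear map U(g) -> N is the same thing as a linear map T(g) -> N
   vanishing on the two-sided ideal generated by x(x)y - (-1)^{|x||y|} y(x)x - [x,y]
   (x, y homogeneous); a linear map T(g) -> N is the same as a function
   f : seq V -> N (a word x1...xk stands for x1 (x) ... (x) xk) which is linear in
   each letter.  f lies in Coind_{g>=0}^g(N) iff moreover f(p u) = p f(u) for p in
   U(g>=0); as U(g>=0) is generated by g_0 and g_1, with g_1 acting on N by 0,
   it suffices to ask this for p in g_0 and p in g_1. *)
Definition in_Coind (V : lmodType K) (pe : V -> V) (br : V -> V -> V)
    (P0 Pp : V -> V) (N : lmodType K) (rhoN : V -> N -> N) (f : seq V -> N) : Prop :=
  [/\ (forall (a b : seq V) (c : K) (x y : V),
         f (a ++ (c *: x + y) :: b) = c *: f (a ++ x :: b) + f (a ++ y :: b)),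
    (forall (a b : seq V) (p q : bool) (x y : V), homog pe p x -> homog pe q y ->
         f (a ++ x :: y :: b) = ssign p q *: f (a ++ y :: x :: b) + f (a ++ br x y :: b)),
    (forall x w, P0 x = x -> f (x :: w) = rhoN x (f w)) &
    (forall x w, Pp x = x -> f (x :: w) = 0)].

Definition coind_act (V N : lmodType K) (x : V) (f : seq V -> N) : seq V -> N :=
  fun w => f (rcons w x).

(* Evenness: phi maps
   homogeneous m of parity a to an f with f(x1...xk) of parity a + |x1| + ... + |xk|
   for homogeneous letters xi, i.e. f is homogeneous of parity a in Hom_C(U(g), N). *)
Definition embeds_into_Coind (V : lmodType K) (pe : V -> V) (br : V -> V -> V)
    (P0 Pp : V -> V) (M : lmodType K) (qM : M -> M) (rhoM : V -> M -> M)
    (N : lmodType K) (qN : N -> N) (rhoN : V -> N -> N) : Prop :=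
  exists phi : M -> (seq V -> N),
    [/\ (forall c m m' w, phi (c *: m + m') w = c *: phi m w + phi m' w),
      (forall m, in_Coind pe br P0 Pp rhoN (phi m)),
      (forall m m', (forall w, phi m w = phi m' w) -> m = m'),
      (forall x m w, phi (rhoM x m) w = coind_act x (phi m) w) &
      (forall (a : bool) (m : M) (w : seq (bool * V)),
         homog qM a m -> (forall l, l \in w -> homog pe l.1 l.2) ->
         homog qN (foldl addb a (map fst w)) (phi m (map snd w)))].

End Super.

(* Main.v *)
Require Import Defs.
From HB Require Import structures.
From mathcomp Require Import all_boot all_order all_algebra.
From mathcomp Require Import reals complex.
From Stdlib Require Import ClassicalEpsilon PropExtensionality FunctionalExtensionality Classical.
Set Implicit Arguments. Unset Strict Implicit. Unset Printing Implicit Defensive.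
Import GRing.Theory.
Local Open Scope ring_scope.


Section Lin.
Variables (K : fieldType) (W W2 : lmodType K).
Implicit Types (f : W -> W2).

Lemma lin0 f : linear f -> f 0 = 0.
Proof.
move=> Hf; have := Hf 1 0 0; rewrite !scale1r !addr0 => H.
by apply: (@addrI _ (f 0)); rewrite addr0 -H.
Qed.
Lemma linD f : linear f -> forall u v, f (u + v) = f u + f v.
Proof. by move=> Hf u v; have := Hf 1 u v; rewrite !scale1r. Qed.
Lemma linZ f : linear f -> forall c u, f (c *: u) = c *: f u.
Proof. by move=> Hf c u; have := Hf c u 0; rewrite !addr0 (lin0 Hf) addr0. Qed.
Lemma linN f : linear f -> forall u, f (- u) = - f u.
Proof. by move=> Hf u; rewrite -scaleN1r linZ // scaleN1r. Qed.
Lemma linB f : linear f -> forall u v, f (u - v) = f u - f v.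
Proof. by move=> Hf u v; rewrite linD // linN. Qed.
Lemma lin_sum f (c : nat -> K) (g : nat -> W) n : linear f ->
  f (\sum_(0 <= i < n) c i *: g i) = \sum_(0 <= i < n) c i *: f (g i).
Proof.
move=> Hf; elim: n => [|n IH]; first by rewrite !big_geq // lin0.
by rewrite !big_nat_recr //= linD // IH linZ.
Qed.

End Lin.

Section Basic.
Variables (K : fieldType) (W : lmodType K).

Definition subsp (S : W -> Prop) := S 0 /\ forall c u w, S u -> S w -> S (c *: u + w).
Definition span (G : W -> Prop) : W -> Prop :=
  fun v => forall T, subsp T -> (forall g, G g -> T g) -> T v.

Lemma subspD S : subsp S -> forall u w, S u -> S w -> S (u + w).
Proof. by move=> [S0 Sl] u w Su Sw; have := Sl 1 u w Su Sw; rewrite scale1r. Qed.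
Lemma subspZ S : subsp S -> forall c u, S u -> S (c *: u).
Proof. by move=> [S0 Sl] c u Su; have := Sl c u 0 Su S0; rewrite addr0. Qed.
Lemma subspN S : subsp S -> forall u, S u -> S (- u).
Proof. by move=> HS u Su; rewrite -scaleN1r; apply: subspZ. Qed.
Lemma subspB S : subsp S -> forall u w, S u -> S w -> S (u - w).
Proof. by move=> HS u w Su Sw; apply: subspD => //; apply: subspN. Qed.
Lemma subsp_sum S (c : nat -> K) (g : nat -> W) n : subsp S ->
  (forall i, (i < n)%N -> S (g i)) -> S (\sum_(0 <= i < n) c i *: g i).
Proof.
move=> HS; elim: n => [|n IH] Hg; first by rewrite big_geq //; case: HS.
rewrite big_nat_recr //=; apply: subspD => //.
  by apply: IH => i Hi; apply: Hg; apply: ltnW.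
by apply: subspZ => //; apply: Hg.
Qed.

Lemma span_subsp G : subsp (span G).
Proof.
split; first by move=> T [T0 _].
by move=> c u w Hu Hw T HT HG; case: (HT) => _ Tl; apply: Tl; [apply: Hu|apply: Hw].
Qed.
Lemma span_gen G g : G g -> span G g.
Proof. by move=> Gg T _ HG; apply: HG. Qed.
Lemma span_min G T v : span G v -> subsp T -> (forall g, G g -> T g) -> T v.
Proof. by move=> Hv HT HG; apply: Hv. Qed.

Lemma ext_vanish (A : nat -> W -> W) :
  (forall i, linear (A i)) ->
  (forall i v, A i (A i v) = 0) ->
  (forall i j v, A i (A j v) = - A j (A i v)) ->
  forall j (S : W -> Prop), subsp S ->
  (forall v, S v -> span (fun u => exists i s, (i < j)%N /\ S s /\ u = A i s) v) ->
  forall v, S v -> v = 0.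
Proof.
move=> Alin Asq Aanti; elim=> [|j IH] S HS Hspan v Sv.
  have := Hspan v Sv (fun u => u = 0); apply.
    split=> // c u w -> ->; by rewrite scaler0 addr0.
  by move=> g [i [s [//]]].
pose S1 := fun u => exists s, S s /\ u = A j s.
have HS1 : subsp S1.
  split; first by exists 0; split; [case: HS|rewrite lin0].
  move=> c u w [s [Ss ->]] [s' [Ss' ->]]; exists (c *: s + s'); split.
    by case: HS => _; apply.
  by rewrite Alin.
have Aj0 : forall s, S s -> A j s = 0.
  move=> s Ss; apply: (IH S1) => //; last by exists s.
  move=> u [s0 [Ss0 ->]].
  pose T := fun v => span (fun u => exists i s, (i < j)%N /\ S1 s /\ u = A i s) (A j v).
  have HT : subsp T.
    split; first by rewrite /T lin0; case: (span_subsp (fun u => exists i s, (i < j)%N /\ S1 s /\ u = A i s)).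
    move=> c u1 w1 Hu Hw; rewrite /T Alin.
    by case: (span_subsp (fun u => exists i s, (i < j)%N /\ S1 s /\ u = A i s)) => _; apply.
  apply: (span_min (Hspan s0 Ss0) HT) => g [i [s1 [Hi [Ss1 ->]]]].
  rewrite /T; have [Hij|Hij|Hij] := ltngtP i j.
  - rewrite Aanti; apply: (subspN (span_subsp _)).
    apply: span_gen; exists i, (A j s1); split => //; split => //; by exists s1.
  - by move: Hi; rewrite ltnS leqNgt Hij.
  - rewrite Hij Asq; case: (span_subsp (fun u => exists i s, (i < j)%N /\ S1 s /\ u = A i s)) => //.
apply: (IH S) => // v1 Sv1.
have HT := span_subsp (fun u => exists i s, (i < j)%N /\ S s /\ u = A i s).
apply: (span_min (Hspan v1 Sv1) HT) => g [i [s1 [Hi [Ss1 ->]]]].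
have [Hij|Hij|Hij] := ltngtP i j.
- by apply: span_gen; exists i, s1.
- by move: Hi; rewrite ltnS leqNgt Hij.
- by rewrite Hij Aj0 //; case: HT.
Qed.

Fixpoint Llist (T : nat -> W -> W) (m0 : W) (j : nat) : seq W :=
  if j is j'.+1 then Llist T m0 j' ++ map (T j') (Llist T m0 j') else [:: m0].

Lemma Llist_mono T m0 j k : (j <= k)%N -> forall l, l \in Llist T m0 j -> l \in Llist T m0 k.
Proof.
elim: k => [|k IH]; first by rewrite leqn0 => /eqP ->.
rewrite leq_eqVlt => /orP [/eqP -> //| Hjk] l Hl /=.
by rewrite mem_cat IH.
Qed.

Lemma Llist_closed (T : nat -> W -> W) m0 :
  (forall i, linear (T i)) ->
  (forall i v, T i (T i v) = 0) ->
  (forall i j v, T i (T j v) = - T j (T i v)) ->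
  forall j i, (i < j)%N -> forall v, span (fun l => l \in Llist T m0 j) v ->
     span (fun l => l \in Llist T m0 j) (T i v).
Proof.
move=> Tlin Tsq Tanti.
have key : forall j i, (i < j)%N -> forall l, l \in Llist T m0 j ->
     span (fun l => l \in Llist T m0 j) (T i l).
  elim=> [//|j IH] i Hi l /=; rewrite mem_cat => /orP [Hl|/mapP [l' Hl' ->]].
  - have [Hij|Hij|Hij] := ltngtP i j.
    + apply: (span_min (IH i Hij l Hl)); first exact: span_subsp.
      move=> g Hg; apply: span_gen => /=; by rewrite mem_cat Hg.
    + by move: Hi; rewrite ltnS leqNgt Hij.
    + rewrite Hij; apply: span_gen; rewrite mem_cat; apply/orP; right; apply/mapP; by exists l.
  - have [Hij|Hij|Hij] := ltngtP i j.
    + rewrite Tanti; apply: (subspN (span_subsp _)).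
      apply: (span_min (T := fun v => span (fun l => l \in Llist T m0 j.+1) (T j v)) (IH i Hij l' Hl')).
        split; first by rewrite lin0 //; case: (span_subsp (fun l => l \in Llist T m0 j.+1)).
        move=> c u w Hu Hw; rewrite Tlin.
        by case: (span_subsp (fun l => l \in Llist T m0 j.+1)) => _; apply.
      move=> g Hg; apply: span_gen => /=; rewrite mem_cat; apply/orP; right; apply/mapP; by exists g.
    + by move: Hi; rewrite ltnS leqNgt Hij.
    + rewrite Hij Tsq; by case: (span_subsp (fun l => l \in Llist T m0 j.+1)).
move=> j i Hij v Hv; apply: (span_min (T := fun v => span (fun l => l \in Llist T m0 j) (T i v)) Hv).
  split; first by rewrite lin0 //; case: (span_subsp (fun l => l \in Llist T m0 j)).
  move=> c u w Hu Hw; rewrite Tlin.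
  by case: (span_subsp (fun l => l \in Llist T m0 j)) => _; apply.
by move=> g Hg; apply: key.
Qed.

Lemma m0_Llist T m0 j : m0 \in Llist T m0 j.
Proof. by apply: (@Llist_mono T m0 0) => //; rewrite inE. Qed.

End Basic.


Record subspR (F : fieldType) (M : lmodType F) := SubspR {
  spP :> M -> Prop;
  sp0 : spP 0;
  splin : forall c u w, spP u -> spP w -> spP (c *: u + w) }.

Section Quot.
Variables (F : fieldType) (M : lmodType F) (S : subspR M).
Lemma S0 : S 0. Proof. exact: sp0. Qed.
Lemma Slin c u w : S u -> S w -> S (c *: u + w). Proof. exact: splin. Qed.

Lemma SD u w : S u -> S w -> S (u + w).
Proof. by move=> Su Sw; have := Slin 1 Su Sw; rewrite scale1r. Qed.
Lemma SZ c u : S u -> S (c *: u).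
Proof. by move=> Su; have := Slin c Su S0; rewrite addr0. Qed.
Lemma SN u : S u -> S (- u).
Proof. by move=> Su; have := SZ (-1) Su; rewrite scaleN1r. Qed.
Lemma SB u w : S u -> S w -> S (u - w).
Proof. by move=> Su Sw; apply: SD => //; apply: SN. Qed.

Definition canon (m : M) : M := epsilon (inhabits 0) (fun r => S (r - m)).
Lemma canonP m : S (canon m - m).
Proof. apply: (epsilon_spec (inhabits 0) (fun r => S (r - m))); exists m; rewrite subrr; exact: S0. Qed.
Lemma canon_eq m m' : S (m - m') -> canon m = canon m'.
Proof.
move=> Smm; rewrite /canon; f_equal; apply: functional_extensionality => r.
apply: propositional_extensionality; split => H.
- by have := SD H Smm; rewrite addrA subrK.
- by have := SB H Smm; rewrite opprB addrA subrK.
Qed.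
Lemma canon_idem m : canon (canon m) = canon m.
Proof. by apply: canon_eq; apply: canonP. Qed.

Definition QT := {m : M | canon m == m}.
HB.instance Definition _ := Choice.on QT.

Definition pi (m : M) : QT := exist _ (canon m) (introT eqP (canon_idem m)).
Lemma piK q : pi (sval q) = q.
Proof. case: q => m Hm; apply: val_inj => /=; exact: (eqP Hm). Qed.
Lemma pi_eq a b : S (a - b) -> pi a = pi b.
Proof. by move=> H; apply: val_inj => /=; apply: canon_eq. Qed.
Lemma pi_eqE a b : pi a = pi b -> S (a - b).
Proof.
move=> /(congr1 sval) /= E.
have H1 := canonP a; have H2 := canonP b; rewrite E in H1.
by have := SB H2 H1; rewrite opprB addrC addrA subrK.
Qed.
Lemma val_pi a : S (sval (pi a) - a).
Proof. exact: canonP. Qed.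
Lemma quot_ind (P : QT -> Prop) : (forall a, P (pi a)) -> forall q, P q.
Proof. by move=> H q; rewrite -(piK q). Qed.

Definition qzero : QT := pi 0.
Definition qadd (x y : QT) : QT := pi (sval x + sval y).
Definition qopp (x : QT) : QT := pi (- sval x).
Definition qscale (c : F) (x : QT) : QT := pi (c *: sval x).

Lemma qaddE a b : qadd (pi a) (pi b) = pi (a + b).
Proof.
apply: pi_eq; have := SD (val_pi a) (val_pi b).
by rewrite opprD addrACA.
Qed.
Lemma qoppE a : qopp (pi a) = pi (- a).
Proof. by apply: pi_eq; have := SN (val_pi a); rewrite opprB opprK addrC. Qed.
Lemma qscaleE c a : qscale c (pi a) = pi (c *: a).
Proof. by apply: pi_eq; have := SZ c (val_pi a); rewrite scalerBr. Qed.

Lemma qaddA : associative qadd.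
Proof.
elim/quot_ind => a; elim/quot_ind => b; elim/quot_ind => c.
by rewrite !qaddE addrA.
Qed.
Lemma qaddC : commutative qadd.
Proof. by elim/quot_ind => a; elim/quot_ind => b; rewrite !qaddE addrC. Qed.
Lemma qadd0 : left_id qzero qadd.
Proof. by elim/quot_ind => a; rewrite /qzero qaddE add0r. Qed.
Lemma qaddN : left_inverse qzero qopp qadd.
Proof. by elim/quot_ind => a; rewrite qoppE qaddE addNr. Qed.
HB.instance Definition _ := GRing.isZmodule.Build QT qaddA qaddC qadd0 qaddN.

Lemma qscaleA a b v : qscale a (qscale b v) = qscale (a * b) v.
Proof. by elim/quot_ind: v => v; rewrite !qscaleE scalerA. Qed.
Lemma qscale1 : left_id 1 qscale.
Proof. by elim/quot_ind => v; rewrite qscaleE scale1r. Qed.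
Lemma qscaleDr : right_distributive qscale qadd.
Proof. by move=> c; elim/quot_ind => a; elim/quot_ind => b; rewrite !(qscaleE, qaddE) scalerDr. Qed.
Lemma qscaleDl v : {morph qscale^~ v : a b / a + b >-> qadd a b}.
Proof. by move=> a b; elim/quot_ind: v => v; rewrite !(qscaleE, qaddE) scalerDl. Qed.
HB.instance Definition _ := GRing.Zmodule_isLmodule.Build F QT qscaleA qscale1 qscaleDr qscaleDl.

Lemma pi_lin c a b : pi (c *: a + b) = c *: pi a + pi b.
Proof. have -> : c *: pi a = pi (c *: a) := qscaleE c a. exact: (esym (qaddE _ _)). Qed.
Lemma pi0 : pi 0 = 0.
Proof. by []. Qed.
Lemma pi_eq0 a : pi a = 0 -> S a.
Proof. by move=> /pi_eqE; rewrite subr0. Qed.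
Lemma pi_S a : S a -> pi a = 0.
Proof. by move=> Sa; apply: pi_eq; rewrite subr0. Qed.
End Quot.

From mathcomp Require Import boolp classical_sets.

Section Main.
Variables (K : fieldType) (V : lmodType K) (pe : V -> V) (br : V -> V -> V) (Pm P0 Pp : V -> V).
Hypothesis pe_lin : linear pe.
Hypothesis pe_idem : forall x, pe (pe x) = pe x.
Hypothesis br_par : forall a b x y, homog pe a x -> homog pe b y -> homog pe (a (+) b) (br x y).
Hypothesis br_anti : forall a b x y, homog pe a x -> homog pe b y -> br x y = - (ssign K a b *: br y x).
Hypothesis Pm_lin : linear Pm.
Hypothesis P0_lin : linear P0.
Hypothesis Pp_lin : linear Pp.
Hypothesis Psum : forall x, Pm x + P0 x + Pp x = x.
Hypothesis Pidem : forall x, Pm (Pm x) = Pm x /\ P0 (P0 x) = P0 x /\ Pp (Pp x) = Pp x.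
Hypothesis Pcross : forall x, Pm (P0 x) = 0 /\ Pm (Pp x) = 0 /\ P0 (Pm x) = 0 /\
               P0 (Pp x) = 0 /\ Pp (Pm x) = 0 /\ Pp (P0 x) = 0.
Hypothesis P0pe : forall x, P0 x = pe x.
Hypothesis g0gm : forall x y, P0 x = x -> Pm y = y -> Pm (br x y) = br x y.
Hypothesis g0gp : forall x y, P0 x = x -> Pp y = y -> Pp (br x y) = br x y.
Hypothesis gmgm : forall x y, Pm x = x -> Pm y = y -> br x y = 0.
Hypothesis gpgp : forall x y, Pp x = x -> Pp y = y -> br x y = 0.
Variables (n : nat) (e : nat -> V).
Hypothesis Hfin : forall x, homog pe true x -> exists c : nat -> K, x = \sum_(0 <= i < n) c i *: e i.
Variables (M : lmodType K) (qM : M -> M) (rho : V -> M -> M).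
Hypothesis qM_lin : linear qM.
Hypothesis qM_idem : forall x, qM (qM x) = qM x.
Hypothesis rho_lin : forall x, linear (rho x).
Hypothesis rho_add : forall c x y w, rho (c *: x + y) w = c *: rho x w + rho y w.
Hypothesis rho_par : forall a b x w, homog pe a x -> homog qM b w -> homog qM (a (+) b) (rho x w).
Hypothesis rho_br : forall a b x y w, homog pe a x -> homog pe b y ->
       rho (br x y) w = rho x (rho y w) - ssign K a b *: rho y (rho x w).
Hypothesis M_nz : exists w : M, w != 0.
Hypothesis M_simple : forall S : M -> Prop, sub_supermodule qM rho (fun _ => True) S ->
       (forall w, S w -> w = 0) \/ (forall w, S w).
Hypothesis two_nz : (2%:R : K) != 0.

Definition gm x := Pm x = x.
Definition g0 x := P0 x = x.
Definition gp x := Pp x = x.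

Lemma gm_odd x : gm x -> pe x = 0.
Proof. by rewrite /gm => <-; rewrite -P0pe; case: (Pcross x) => [_ [_ [->]]]. Qed.
Lemma gp_odd x : gp x -> pe x = 0.
Proof. by rewrite /gp => <-; rewrite -P0pe; case: (Pcross x) => [_ [_ [_ [->]]]]. Qed.
Lemma g0_even x : g0 x -> pe x = x.
Proof. by rewrite /g0 -P0pe. Qed.
Lemma gm_Pm x : gm (Pm x). Proof. by case: (Pidem x). Qed.
Lemma g0_P0 x : g0 (P0 x). Proof. by case: (Pidem x) => _ []. Qed.
Lemma gp_Pp x : gp (Pp x). Proof. by case: (Pidem x) => _ [] _. Qed.

Lemma rhoL w : linear (fun x => rho x w).
Proof. by move=> c x y; apply: rho_add. Qed.
Lemma rho_addx x y w : rho (x + y) w = rho x w + rho y w.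
Proof. exact: (linD (rhoL w)). Qed.
Lemma rho0x w : rho 0 w = 0.
Proof. exact: (lin0 (rhoL w)). Qed.
Lemma rho_x0 x : rho x 0 = 0.
Proof. exact: (lin0 (rho_lin x)). Qed.

Lemma ssignFb b : ssign K false b = 1. Proof. by []. Qed.
Lemma ssignbF b : ssign K b false = 1. Proof. by rewrite /ssign andbF. Qed.
Lemma ssignTT : ssign K true true = -1. Proof. by []. Qed.

Lemma rho_comm0 x y b w : g0 x -> homog pe b y ->
  rho x (rho y w) = rho y (rho x w) + rho (br x y) w.
Proof.
move=> Hx Hy; rewrite (@rho_br false b) //; last by rewrite /homog g0_even.
by rewrite ssignFb scale1r addrC subrK.
Qed.
Lemma rho_comm1 y x w : pe y = 0 -> g0 x ->
  rho y (rho x w) = rho x (rho y w) + rho (br y x) w.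
Proof.
move=> Hy Hx; rewrite (@rho_br true false) //; last by rewrite /homog g0_even.
by rewrite ssignbF scale1r addrC subrK.
Qed.
Lemma rho_anti y z w : pe y = 0 -> pe z = 0 ->
  rho y (rho z w) = - rho z (rho y w) + rho (br y z) w.
Proof.
move=> Hy Hz; rewrite (@rho_br true true) //.
by rewrite ssignTT scaleN1r opprK addrC addrK.
Qed.
Lemma rho_sq y w : pe y = 0 -> br y y = 0 -> rho y (rho y w) = 0.
Proof.
move=> Hy Hb; have := rho_anti w Hy Hy; rewrite Hb rho0x addr0 => H.
have H2 : (2%:R : K) *: rho y (rho y w) = 0.
  by rewrite scaler_nat mulr2n {2}H subrr.
by rewrite -[rho y _](scale1r) -(mulVf two_nz) -scalerA H2 scaler0.
Qed.

Lemma br_g0gm x y : g0 x -> gm y -> gm (br y x).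
Proof.
move=> Hx Hy; rewrite /gm (@br_anti true false y x); last by rewrite /homog g0_even.
  by rewrite ssignbF scale1r (linN Pm_lin) g0gm.
exact: gm_odd.
Qed.
Lemma br_gmgp y z : gm y -> gp z -> g0 (br y z).
Proof.
move=> Hy Hz; rewrite /g0 P0pe.
by have := @br_par true true y z (gm_odd Hy) (gp_odd Hz).
Qed.
Lemma br_g0g0 x y : g0 x -> g0 y -> g0 (br x y).
Proof.
move=> Hx Hy; rewrite /g0 P0pe.
by have := @br_par false false x y (g0_even Hx) (g0_even Hy).
Qed.

Lemma decomp x : x = Pm x + P0 x + Pp x.
Proof. by rewrite Psum. Qed.

Lemma qrho a x m : homog pe a x ->
  qM (rho x m) = if a then rho x m - rho x (qM m) else rho x (qM m).
Proof.
move=> Hx.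
have Hm : m = qM m + (m - qM m) by rewrite addrC subrK.
have H0 : homog qM false (qM m) by rewrite /homog qM_idem.
have H1 : homog qM true (m - qM m) by rewrite /homog (linB qM_lin) qM_idem subrr.
have E1 := rho_par Hx H0; have E2 := rho_par Hx H1.
rewrite {1}Hm (linD (rho_lin x)) (linD qM_lin).
case: a Hx E1 E2 => /= Hx; rewrite /homog /= => -> ->;
  by rewrite ?add0r ?addr0 ?(linB (rho_lin x)).
Qed.

Lemma qrho_gen x m :
  qM (rho x m) = rho (pe x) (qM m) + (rho (x - pe x) m - rho (x - pe x) (qM m)).
Proof.
have -> : rho x m = rho (pe x) m + rho (x - pe x) m by rewrite -rho_addx addrC subrK.
have h1 : homog pe false (pe x) by rewrite /homog pe_idem.
have h2 : homog pe true (x - pe x) by rewrite /homog (linB pe_lin) pe_idem subrr.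
by rewrite (linD qM_lin) (qrho _ h1) (qrho _ h2).
Qed.

Lemma odd_sum (P : V -> V) : linear P -> forall z, P z = z -> pe z = 0 ->
  exists c : nat -> K, z = \sum_(0 <= i < n) c i *: P (e i).
Proof.
move=> HP z Pz Hz; have [c Hc] := Hfin Hz.
by exists c; rewrite -(lin_sum _ _ _ HP) -Hc Pz.
Qed.

Definition A i := rho (Pp (e i)).
Definition T i := rho (Pm (e i)).

Lemma rho_sum (c : nat -> K) (g : nat -> V) w :
  rho (\sum_(0 <= i < n) c i *: g i) w = \sum_(0 <= i < n) c i *: rho (g i) w.
Proof. exact: (lin_sum _ _ _ (rhoL w)). Qed.

Lemma A_sq i v : A i (A i v) = 0.
Proof. by apply: rho_sq; [apply: gp_odd; apply: gp_Pp | apply: gpgp; apply: gp_Pp]. Qed.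
Lemma A_anti i j v : A i (A j v) = - A j (A i v).
Proof.
rewrite /A (rho_anti _ (gp_odd (gp_Pp _)) (gp_odd (gp_Pp _))).
by rewrite gpgp ?rho0x ?addr0 //; apply: gp_Pp.
Qed.
Lemma T_sq i v : T i (T i v) = 0.
Proof. by apply: rho_sq; [apply: gm_odd; apply: gm_Pm | apply: gmgm; apply: gm_Pm]. Qed.
Lemma T_anti i j v : T i (T j v) = - T j (T i v).
Proof.
rewrite /T (rho_anti _ (gm_odd (gm_Pm _)) (gm_odd (gm_Pm _))).
by rewrite gmgm ?rho0x ?addr0 //; apply: gm_Pm.
Qed.

Lemma Lsimp (Y : M -> Prop) m0 b : subsp Y -> (forall x v, Y v -> Y (rho x v)) ->
  m0 != 0 -> homog qM b m0 -> Y m0 -> forall m, Y m.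
Proof.
move=> HY Yrho m0nz Hm0 Ym0.
have HY' : sub_supermodule qM rho (fun _ => True) (fun m => Y m /\ Y (qM m)).
  split.
  - by rewrite (lin0 qM_lin); split; case: HY.
  - move=> c u w [Yu Yqu] [Yw Yqw]; rewrite qM_lin; case: HY => _ Hl; split; exact: Hl.
  - by move=> w [Yw Yqw]; rewrite qM_idem.
  - move=> x w _ [Yw Yqw]; split; first exact: Yrho.
    rewrite qrho_gen; apply: subspD => //; first exact: Yrho.
    by apply: subspB => //; apply: Yrho.
case: (M_simple HY') => [H0|Hall m]; last by case: (Hall m).
have : m0 = 0.
  apply: H0; split => //; case: b Hm0; rewrite /homog => ->; first by case: HY.
  done.
by move/eqP; rewrite (negbTE m0nz).
Qed.

Section Fingen.
Variables (m0 : M) (b0 : bool).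
Hypothesis m0nz : m0 != 0.
Hypothesis Hm0 : homog qM b0 m0.

Definition SL := span (fun l => l \in Llist T m0 n).

Lemma SL_gm y v : gm y -> SL v -> SL (rho y v).
Proof.
move=> Hy Hv; have [c ->] := odd_sum Pm_lin Hy (gm_odd Hy).
rewrite rho_sum; apply: subsp_sum; first exact: span_subsp.
move=> i Hi; apply: (Llist_closed (T := T)) => //.
- by move=> j; apply: rho_lin.
- exact: T_sq.
- exact: T_anti.
Qed.

Definition U0 : M -> Prop := fun v => forall Tt : M -> Prop, subsp Tt -> (forall u, SL u -> Tt u) ->
  (forall x u, g0 x -> Tt u -> Tt (rho x u)) -> Tt v.

Lemma U0_subsp : subsp U0.
Proof.
split; first by move=> Tt [] .
move=> c u w Hu Hw Tt HT H1 H2; case: (HT) => _; apply; [exact: Hu|exact: Hw].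
Qed.
Lemma U0_g0 x u : g0 x -> U0 u -> U0 (rho x u).
Proof. by move=> Hx Hu Tt HT H1 H2; apply: (H2) => //; exact: (Hu Tt HT H1 H2). Qed.
Lemma SL_U0 u : SL u -> U0 u.
Proof. by move=> Hu Tt HT H1 H2; apply: H1. Qed.

Lemma U0_gm v : U0 v -> forall y, gm y -> U0 (rho y v).
Proof.
move=> Hv; suff: U0 v /\ (forall y, gm y -> U0 (rho y v)) by case.
apply: (Hv (fun v => U0 v /\ forall y, gm y -> U0 (rho y v))).
- split.
    split; first by case: U0_subsp.
    by move=> y _; rewrite rho_x0; case: U0_subsp.
  move=> c u w [Hu Hu'] [Hw Hw']; split; first by case: U0_subsp => _; apply.
  by move=> y Hy; rewrite rho_lin; case: U0_subsp => _; apply; [apply: Hu'|apply: Hw'].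
- move=> u Hu; split; first exact: SL_U0.
  by move=> y Hy; apply: SL_U0; apply: SL_gm.
- move=> x u Hx [Hu Hu']; split; first exact: U0_g0.
  move=> y Hy; rewrite (rho_comm1 _ (gm_odd Hy) Hx); apply: (subspD U0_subsp).
    by apply: U0_g0 => //; apply: Hu'.
  by apply: Hu'; apply: br_g0gm.
Qed.

Definition X0 : M -> Prop := fun v => forall Tt : M -> Prop, subsp Tt -> (forall u, U0 u -> Tt u) ->
  (forall z u, gp z -> Tt u -> Tt (rho z u)) -> Tt v.

Lemma X0_subsp : subsp X0.
Proof.
split; first by move=> Tt [] .
move=> c u w Hu Hw Tt HT H1 H2; case: (HT) => _; apply; [exact: Hu|exact: Hw].
Qed.
Lemma X0_gp z u : gp z -> X0 u -> X0 (rho z u).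
Proof. by move=> Hz Hu Tt HT H1 H2; apply: (H2) => //; exact: (Hu Tt HT H1 H2). Qed.
Lemma U0_X0 u : U0 u -> X0 u.
Proof. by move=> Hu Tt HT H1 H2; apply: H1. Qed.

Lemma X0_rho v : X0 v -> forall x, X0 (rho x v).
Proof.
move=> Hv.
have H : X0 v /\ (forall a, g0 a -> X0 (rho a v)) /\ (forall y, gm y -> X0 (rho y v)).
  apply: (Hv (fun v => X0 v /\ (forall a, g0 a -> X0 (rho a v)) /\ (forall y, gm y -> X0 (rho y v)))).
  - split.
      split; first by case: X0_subsp.
      by split=> y _; rewrite rho_x0; case: X0_subsp.
    move=> c u w [Hu [Hu1 Hu2]] [Hw [Hw1 Hw2]]; split; first by case: X0_subsp => _; apply.
    by split=> y Hy; rewrite rho_lin; case: X0_subsp => _; apply; [apply: Hu1|apply: Hw1|apply: Hu2|apply: Hw2].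
  - move=> u Hu; split; first exact: U0_X0.
    split=> y Hy; apply: U0_X0; [exact: U0_g0|exact: U0_gm].
  - move=> z u Hz [Hu [Hu1 Hu2]]; split; first exact: X0_gp.
    split.
    + move=> a Ha; rewrite (@rho_comm0 a z true) //; last exact: gp_odd.
      apply: (subspD X0_subsp); first by apply: X0_gp => //; apply: Hu1.
      by apply: X0_gp => //; apply: g0gp => //; apply: Hz.
    + move=> y Hy; rewrite (rho_anti _ (gm_odd Hy) (gp_odd Hz)).
      apply: (subspD X0_subsp); first by apply: (subspN X0_subsp); apply: X0_gp => //; apply: Hu2.
      by apply: Hu1; apply: br_gmgp.
move=> x; case: H => _ [H1 H2].
rewrite (decomp x) !rho_addx; apply: (subspD X0_subsp); first apply: (subspD X0_subsp).
- by apply: H2; apply: gm_Pm.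
- by apply: H1; apply: g0_P0.
- by apply: X0_gp => //; apply: gp_Pp.
Qed.

Lemma fingen (S : M -> Prop) : subsp S -> (forall x v, g0 x -> S v -> S (rho x v)) ->
  (forall z v, gp z -> S (rho z v)) -> (forall l, l \in Llist T m0 n -> S l) -> forall m, S m.
Proof.
move=> HS Sg0 Sgp SLl m.
have XS : forall v, X0 v -> S v.
  move=> v Hv; apply: Hv => //; last by move=> z u Hz _; apply: Sgp.
  move=> u Hu; apply: Hu => // u' Hu'; exact: (span_min Hu' HS SLl).
apply: XS; apply: (Lsimp X0_subsp (fun x v Hv => X0_rho Hv x) m0nz Hm0).
by apply: U0_X0; apply: SL_U0; apply: span_gen; apply: m0_Llist.
Qed.
End Fingen.


Definition good (S : M -> Prop) :=
  sub_supermodule qM rho (fun x => P0 x = x) S /\ (forall z v, gp z -> S (rho z v)).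

Lemma good_subsp S : good S -> subsp S.
Proof. by case=> [[H0 Hl _ _] _]; split. Qed.

Lemma good_ext (S S' : M -> Prop) : (forall m, S m <-> S' m) -> good S -> good S'.
Proof.
move=> E; have -> // : S = S'.
by apply: functional_extensionality => m; apply: propositional_extensionality.
Qed.

Definition G1 := span (fun u => exists z v, gp z /\ u = rho z v).

Lemma G1_good : good G1.
Proof.
split; last by move=> z v Hz; apply: span_gen; exists z, v.
have HG := span_subsp (fun u => exists z v, gp z /\ u = rho z v).
split.
- by case: HG.
- by case: HG.
- move=> w Hw; apply: (span_min (T := fun w => G1 (qM w)) Hw).
    split; first by rewrite /= (lin0 qM_lin); case: HG.
    by move=> c u w' Hu Hw'; rewrite /= qM_lin; case: HG => _; apply.
  move=> g [z [v [Hz ->]]]; rewrite /= (@qrho true) //; last exact: gp_odd.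
  by apply: (subspB HG); apply: span_gen; [exists z, v | exists z, (qM v)].
- move=> x w Hx Hw; apply: (span_min (T := fun w => G1 (rho x w)) Hw).
    split; first by rewrite /= rho_x0; case: HG.
    by move=> c u w' Hu Hw'; rewrite /= rho_lin; case: HG => _; apply.
  move=> g [z [v [Hz ->]]]; rewrite /= (@rho_comm0 x z true) //; last exact: gp_odd.
  apply: (subspD HG); apply: span_gen; first by exists z, (rho x v).
  by exists (br x z), v; split => //; apply: g0gp.
Qed.

Lemma G1_proper : exists m, ~ G1 m.
Proof.
apply: NNPP => H.
have Hall : forall m, G1 m.
  by move=> m; apply: NNPP => Hm; apply: H; exists m.
case: M_nz => w /eqP; apply.
have Hsp : forall v, True -> span (fun u => exists i s, (i < n)%N /\ True /\ u = A i s) v.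
  move=> v _; apply: (span_min (Hall v)); first exact: span_subsp.
  move=> g [z [v' [Hz ->]]]; have [c ->] := odd_sum Pp_lin Hz (gp_odd Hz).
  rewrite rho_sum; apply: subsp_sum; first exact: span_subsp.
  by move=> i Hi; apply: span_gen; exists i, v'.
have HT : subsp (fun _ : M => True) by [].
exact: (@ext_vanish _ _ A (fun i => rho_lin _) A_sq A_anti n (fun _ => True) HT Hsp w I).
Qed.

Lemma homog_witness : exists m0 b, m0 != 0 /\ homog qM b m0.
Proof.
case: M_nz => w wnz; case: (eqVneq (qM w) 0) => Hq.
  by exists w, true.
by exists (qM w), false; split => //; rewrite /homog qM_idem.
Qed.

Definition Pg (A0 : set M) := good (setU A0 G1) /\ exists m, ~ (setU A0 G1) m.

Lemma exists_max : exists Ks : M -> Prop, good Ks /\ (exists m, ~ Ks m) /\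
  (forall S, good S -> (forall m, Ks m -> S m) -> (exists m, ~ S m) -> forall m, S m -> Ks m).
Proof.
have [m0 [b0 [m0nz Hm0]]] := homog_witness.
have P0set : Pg set0.
  split.
    apply: (good_ext _ G1_good) => m; split; first by right.
    by case.
  case: G1_proper => m Hm; exists m; by case.
have PZ : forall Z, Pg Z -> ~ (forall m, setU Z G1 m).
  move=> Z HZ Hall; case: HZ => _ [m Hm]; exact: (Hm (Hall m)).
have PZ' : forall Z, Pg Z -> ~ (forall l, l \in Llist T m0 n -> setU Z G1 l).
  move=> Z HZ HL; case: (HZ) => Hg _.
  apply: (PZ Z HZ).
  apply: (fingen m0nz Hm0 (good_subsp Hg)).
  - by case: Hg => [[_ _ _ H4] _] x v Hx Hv; apply: H4.
  - by case: Hg => [_ H].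
  - exact: HL.
have [A0 [PA0 A0max]] : exists A0, Pg A0 /\ forall B, proper A0 B -> ~ Pg B.
  apply: Zorn_bigcup => F FP Ftot.
  pose U := setU (bigcup F id) G1.
  have inU : forall Z, (F Z \/ Z = set0) -> forall m, setU Z G1 m -> U m.
    move=> Z HZ m [Zm|Gm]; last by right.
    case: HZ => [FZ|Z0]; first by left; exists Z.
    by move: Zm; rewrite Z0.
  have PF : forall Z, (F Z \/ Z = set0) -> Pg Z.
    by move=> Z [FZ|->] //; apply: FP.
  have one : forall u, U u -> exists Z, (F Z \/ Z = set0) /\ setU Z G1 u.
    move=> u [[X FX Xu]|Gu].
      by exists X; split; [left|left].
    by exists set0; split; [right|right].
  have two : forall u w, U u -> U w -> exists Z, (F Z \/ Z = set0) /\ setU Z G1 u /\ setU Z G1 w.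
    move=> u w [[X FX Xu]|Gu] [[Y FY Yw]|Gw].
    - case: (Ftot X Y FX FY) => [XY|YX].
        by exists Y; split; [left|split; left => //; apply: XY].
      by exists X; split; [left|split; left => //; apply: YX].
    - by exists X; split; [left|split; [left|right]].
    - by exists Y; split; [left|split; [right|left]].
    - by exists set0; split; [right|split; right].
  have goodU : good U.
    split; last by move=> z v Hz; right; case: G1_good => _; apply.
    split.
    - by right; case: (good_subsp G1_good).
    - move=> c u w Hu Hw; have [Z [HZ [Zu Zw]]] := two u w Hu Hw.
      apply: (inU Z HZ); have [[[_ Hl _ _] _] _] := PF Z HZ; exact: Hl.
    - move=> w Hw; have [Z [HZ Zw]] := one w Hw.
      apply: (inU Z HZ); have [[[_ _ Hq _] _] _] := PF Z HZ; exact: Hq.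
    - move=> x w Hx Hw; have [Z [HZ Zw]] := one w Hw.
      apply: (inU Z HZ); have [[[_ _ _ Hr] _] _] := PF Z HZ; exact: Hr.
  split; first exact: goodU.
  apply: NNPP => Hn.
  have Hall : forall m, U m.
    move=> m; apply: NNPP => Hm; apply: Hn; exists m => [[Hm'|Hm']]; apply: Hm; [by left|by right].
  have : exists Z, (F Z \/ Z = set0) /\ forall l, l \in Llist T m0 n -> setU Z G1 l.
    elim: (Llist T m0 n) (fun l (_ : l \in Llist T m0 n) => Hall l) => [|l L IH] HL.
      by exists set0; split => //; right.
    have [Z [HZ HZL]] : exists Z, (F Z \/ Z = set0) /\ forall l, l \in L -> setU Z G1 l.
      by apply: IH => l' Hl'; apply: HL; rewrite inE Hl' orbT.
    have := HL l (mem_head _ _); case=> [[X FX Xl]|Gl].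
    + case: HZ => [FZ|Z0].
      * case: (Ftot X Z FX FZ) => [XZ|ZX].
          exists Z; split; first by left.
          move=> l'; rewrite inE => /orP [/eqP ->|Hl']; first by left; apply: XZ.
          exact: HZL.
        exists X; split; first by left.
        move=> l'; rewrite inE => /orP [/eqP ->|Hl']; first by left.
        by case: (HZL l' Hl') => H; [left; apply: ZX|right].
      * exists X; split; first by left.
        move=> l'; rewrite inE => /orP [/eqP ->|Hl']; first by left.
        by case: (HZL l' Hl'); [rewrite Z0; case|right].
    + exists Z; split => //.
      move=> l'; rewrite inE => /orP [/eqP ->|Hl']; first by right.
      exact: HZL.
  case=> Z [HZ HZL]; exact: (PZ' Z (PF Z HZ) HZL).
exists (setU A0 G1); split; first by case: PA0.
split; first by case: PA0.
move=> S HS KS HSp m Sm.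
have PS : Pg S.
  have E : forall m, setU S G1 m <-> S m.
    by move=> m'; split; [case=> // /(fun h => KS m' (or_intror h))|left].
  split; first by apply: (good_ext _ HS) => m'; rewrite E.
  by case: HSp => m' Hm'; exists m'; rewrite E.
case: (Classical_Prop.classic (forall m, S m -> A0 m)) => [SA|SA]; first by left; apply: SA.
exfalso; apply: (A0max S) => //; split; last by move=> H; apply: SA => m' /H.
by move=> m' Hm'; apply: KS; left.
Qed.

Section Quo.
Variable Ks : M -> Prop.
Hypothesis Kgood : good Ks.
Hypothesis Kprop : exists m, ~ Ks m.
Hypothesis Kmax : forall S, good S -> (forall m, Ks m -> S m) -> (exists m, ~ S m) ->
  forall m, S m -> Ks m.

Lemma K0 : Ks 0. Proof. by case: Kgood => [[]]. Qed.
Lemma Klin c u w : Ks u -> Ks w -> Ks (c *: u + w). Proof. by case: Kgood => [[_ H _ _] _]; apply: H. Qed.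
Lemma Kq u : Ks u -> Ks (qM u). Proof. by case: Kgood => [[_ _ H _] _]; apply: H. Qed.
Lemma Kr x u : g0 x -> Ks u -> Ks (rho x u). Proof. by case: Kgood => [[_ _ _ H] _]; apply: H. Qed.
Lemma Kp z v : gp z -> Ks (rho z v). Proof. by case: Kgood => [_ H]; apply: H. Qed.

Definition KR : subspR M := SubspR K0 Klin.
Definition N : lmodType K := QT KR.
Definition piN (m : M) : N := pi KR m.
Definition qN (q : N) : N := piN (qM (sval q)).
Definition rhoN (x : V) (q : N) : N := piN (rho (P0 x) (sval q)).

Lemma piN_lin : linear piN.
Proof. by move=> c a b; apply: pi_lin. Qed.
Lemma piN0 a : Ks a -> piN a = 0.
Proof. exact: (@pi_S _ _ KR). Qed.
Lemma piN_eq0 a : piN a = 0 -> Ks a.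
Proof. exact: (@pi_eq0 _ _ KR). Qed.
Lemma piN_ind (Q : N -> Prop) : (forall a, Q (piN a)) -> forall q, Q q.
Proof. exact: (@quot_ind _ _ KR). Qed.

Lemma piN_resp (f : M -> M) : linear f -> (forall m, Ks m -> Ks (f m)) ->
  forall a, piN (f (sval (piN a))) = piN (f a).
Proof.
move=> Hf Kf a; apply: (@pi_eq _ _ KR); rewrite -(linB Hf); apply: Kf.
exact: (@val_pi _ _ KR).
Qed.
Lemma qN_pi a : qN (piN a) = piN (qM a).
Proof. by apply: piN_resp => //; apply: Kq. Qed.
Lemma rhoN_pi x a : rhoN x (piN a) = piN (rho (P0 x) a).
Proof. apply: piN_resp; first exact: rho_lin. by move=> m; apply: Kr; apply: g0_P0. Qed.

Lemma homog_pi b u : homog qM b u -> homog qN b (piN u).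
Proof. by rewrite /homog qN_pi; case: b => ->; rewrite ?(lin0 piN_lin). Qed.

Lemma N_super : supermodule pe br (fun x => P0 x = x) qN rhoN.
Proof.
split.
- split.
    move=> c; elim/piN_ind => a; elim/piN_ind => b.
    by rewrite -piN_lin !qN_pi qM_lin piN_lin.
  by elim/piN_ind => a; rewrite !qN_pi qM_idem.
- move=> x _ c; elim/piN_ind => a; elim/piN_ind => b.
  by rewrite -piN_lin !rhoN_pi rho_lin piN_lin.
- move=> c x y w _ _; elim/piN_ind: w => v.
  by rewrite !rhoN_pi P0_lin rho_add piN_lin.
- move=> a b x w Hx Hax; elim/piN_ind: w => v Hv.
  have [v' [Ev Hv']] : exists v', piN v = piN v' /\ homog qM b v'.
    case: b Hv; rewrite /homog qN_pi => Hv.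
      exists (v - qM v); split; first by rewrite (linB piN_lin) Hv subr0.
      by rewrite (linB qM_lin) qM_idem subrr.
    by exists (qM v); split => //; rewrite qM_idem.
  by rewrite Ev rhoN_pi Hx; apply: homog_pi; apply: rho_par.
- move=> a b x y w Hx Hy Ha Hb; elim/piN_ind: w => v.
  rewrite !rhoN_pi (br_g0g0 Hx Hy) Hx Hy (rho_br _ Ha Hb).
  by rewrite (linB piN_lin) (linZ piN_lin).
Qed.

Lemma N_simple : simple_supermodule pe br (fun x => P0 x = x) qN rhoN.
Proof.
split; first exact: N_super.
- case: Kprop => m Hm; exists (piN m); apply/eqP => H; apply: Hm; exact: piN_eq0.
move=> S HS; pose S' := fun m => S (piN m).
have HS' : good S'.
  case: HS => H0 Hl Hq Hr; split.
  + split.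
    * by rewrite /S' (lin0 piN_lin).
    * by move=> c u w Hu Hw; rewrite /S' piN_lin; apply: Hl.
    * by move=> w Hw; rewrite /S' -qN_pi; apply: Hq.
    * move=> x w Hx Hw; rewrite /S'.
      have <- : rhoN x (piN w) = piN (rho x w) by rewrite rhoN_pi Hx.
      exact: Hr.
  + by move=> z v Hz; rewrite /S' piN0 //; apply: Kp.
have KS' : forall m, Ks m -> S' m by move=> m Hm; rewrite /S' piN0 //; case: HS.
case: (Classical_Prop.classic (exists m, ~ S' m)) => [Hp|Hnp].
  left => q Sq; rewrite -(piK q); apply: piN0; apply: (Kmax HS' KS' Hp).
  by rewrite /S'; rewrite [piN _]piK.
right => q; rewrite -(piK q); apply: NNPP => H; apply: Hnp; exists (sval q).
exact: H.
Qed.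

Definition word (w : seq V) (m : M) := foldr rho m w.
Lemma word_lin w : linear (word w).
Proof. by elim: w => [|x w IH] c u v //=; rewrite /word /= -/(word w _) -/(word w _) -/(word w _) IH rho_lin. Qed.
Lemma word_cat a b m : word (a ++ b) m = word a (word b m).
Proof. by rewrite /word foldr_cat. Qed.
Lemma word_cons x b m : word (x :: b) m = rho x (word b m).
Proof. by []. Qed.
Lemma word_rcons w x m : word (rcons w x) m = word w (rho x m).
Proof. by rewrite /word foldr_rcons. Qed.

Definition phi (m : M) (w : seq V) : N := piN (word w m).

Lemma phi_coind m : in_Coind pe br P0 Pp rhoN (phi m).
Proof.
split.
- move=> a b c x y; rewrite /phi !word_cat !word_cons rho_add.
  by rewrite (word_lin a) piN_lin.
- move=> a b p q x y Hx Hy; rewrite /phi !word_cat !word_cons.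
  have -> : rho x (rho y (word b m)) =
    ssign K p q *: rho y (rho x (word b m)) + rho (br x y) (word b m).
    by rewrite (rho_br _ Hx Hy) addrC subrK.
  by rewrite (word_lin a) piN_lin.
- by move=> x w Hx; rewrite /phi word_cons rhoN_pi Hx.
- by move=> x w Hx; rewrite /phi word_cons; apply: piN0; apply: Kp.
Qed.

Lemma Ker_q w d : (forall w, Ks (word w d)) -> Ks (word w (qM d)).
Proof.
elim/last_ind: w d => [|w x IH] d Hd.
  by apply: Kq; apply: (Hd [::]).
have Hd' : forall y, (forall w, Ks (word w (rho y d))).
  by move=> y w'; rewrite -word_rcons; apply: Hd.
have h1 : homog pe false (pe x) by rewrite /homog pe_idem.
have h2 : homog pe true (x - pe x) by rewrite /homog (linB pe_lin) pe_idem subrr.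
have E : rho x (qM d) = qM (rho (pe x) d) + (rho (x - pe x) d - qM (rho (x - pe x) d)).
  rewrite (qrho _ h1) (qrho _ h2).
  have -> : rho (x - pe x) d - (rho (x - pe x) d - rho (x - pe x) (qM d)) = rho (x - pe x) (qM d).
    by rewrite opprB addrC subrK.
  by rewrite -rho_addx [pe x + _]addrC subrK.
rewrite word_rcons E (linD (word_lin w)) (linB (word_lin w)).
have HK := good_subsp Kgood.
apply: (subspD HK); first exact: IH.
by apply: (subspB HK); [apply: Hd' | apply: IH].
Qed.

Lemma Ker0 d : (forall w, Ks (word w d)) -> d = 0.
Proof.
move=> Hd.
have HS : sub_supermodule qM rho (fun _ => True) (fun d => forall w, Ks (word w d)).
  split.
  - by move=> w; rewrite (lin0 (word_lin w)); apply: K0.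
  - by move=> c u v Hu Hv w; rewrite word_lin; apply: Klin.
  - by move=> v Hv w; apply: Ker_q.
  - by move=> x v _ Hv w; rewrite -word_rcons.
case: (M_simple HS) => [H|H]; first exact: H.
case: Kprop => m Hm; exfalso; apply: Hm; exact: (H m [::]).
Qed.

Lemma foldl_addb a b s : foldl addb (a (+) b) s = foldl addb a s (+) b.
Proof.
elim: s a => [|x s IH] a //=.
by rewrite -IH -addbA (addbC b x) addbA.
Qed.

Lemma word_homog a m w : homog qM a m -> (forall l, l \in w -> homog pe l.1 l.2) ->
  homog qM (foldl addb a (map fst w)) (word (map snd w) m).
Proof.
elim: w => [|l w IH] //= Hm Hw.
rewrite foldl_addb addbC; apply: rho_par; first by apply: Hw; rewrite inE eqxx.
by apply: IH => // l' Hl'; apply: Hw; rewrite inE Hl' orbT.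
Qed.

Lemma N_embed : embeds_into_Coind pe br P0 Pp qM rho qN rhoN.
Proof.
exists phi; split.
- by move=> c m m' w; rewrite /phi (word_lin w) piN_lin.
- exact: phi_coind.
- move=> m m' Hmm; apply/eqP; rewrite -subr_eq0; apply/eqP; apply: Ker0 => w.
  rewrite (linB (word_lin w)); apply: (@pi_eqE _ _ KR); exact: Hmm.
- by move=> x m w; rewrite /coind_act /phi word_rcons.
- by move=> a m w Hm Hw; rewrite /phi; apply: homog_pi; apply: word_homog.
Qed.
End Quo.

Lemma main_result : exists (N : lmodType K) (qN : N -> N) (rhoN : V -> N -> N),
  simple_supermodule pe br (fun x => P0 x = x) qN rhoN /\
  embeds_into_Coind pe br P0 Pp qM rho qN rhoN.
Proof.
have [Ks [Hg [Hp Hm]]] := exists_max.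
exists (@N Ks Hg), (@qN Ks Hg), (@rhoN Ks Hg); split.
  exact: (@N_simple Ks Hg Hp Hm).
exact: (@N_embed Ks Hg Hp).
Qed.

End Main.

Lemma two_C (R : realType) : (2%:R : Cplx R) != 0.
Proof. have H : (2%:R : R[i]) != 0 by rewrite Num.Theory.pnatr_eq0. exact: H. Qed.

Unset Implicit Arguments.
Import Num.Theory.

Theorem lemma4p2 (R : realType) (V : lmodType (Cplx R)) (pe : V -> V)
    (br : V -> V -> V) (Pm P0 Pp : V -> V)
    (Hlie : lie_superalgebra pe br)
    (Hgr : compatible_grading pe br Pm P0 Pp)
    (Hfin : odd_part_findim pe)
    (M : lmodType (Cplx R)) (qM : M -> M) (rhoM : V -> M -> M)
    (HM : simple_supermodule pe br (fun _ => True) qM rhoM) :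
  exists (N : lmodType (Cplx R)) (qN : N -> N) (rhoN : V -> N -> N),
    simple_supermodule pe br (fun x => P0 x = x) qN rhoN /\
    embeds_into_Coind pe br P0 Pp qM rhoM qN rhoN.
Proof.
case: Hlie => [[pe_lin pe_idem] _ br_par br_anti _].
case: Hgr => [[Pm_lin [P0_lin Pp_lin]] Psum Pidem Pcross [P0pe [g0gm g0gp gmgm gpgp]]].
case: HM => [[[qM_lin qM_idem] rho_lin rho_add rho_par rho_br] M_nz M_simple].
case: Hfin => n [e He].
pose e' (j : nat) : V := if (insub j : option 'I_n) is Some i then e i else 0.
have Hfin' : forall x, homog pe true x ->
    exists c : nat -> Cplx R, x = \sum_(0 <= i < n) c i *: e' i.
  move=> x Hx; have [c Hc] := He x Hx.
  exists (fun j => if (insub j : option 'I_n) is Some i then c i else 0).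
  by rewrite Hc big_mkord; apply: eq_bigr => i _; rewrite /e' valK.
exact: (@main_result (Cplx R) V pe br Pm P0 Pp pe_lin pe_idem br_par br_anti
  Pm_lin P0_lin Pp_lin Psum Pidem Pcross P0pe g0gm g0gp gmgm gpgp n e' Hfin'
  M qM rhoM qM_lin qM_idem (fun x => rho_lin x I)
  (fun c x y w => rho_add c x y w I I) (fun a b x w => rho_par a b x w I)
  (fun a b x y w => rho_br a b x y w I I) M_nz M_simple (two_C R)).
Qed.
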